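(* Let $\mathbf K$ be a commutative field, $p,q\in\mathbb N$ and $A\in\mathrm{Rec}_{p\times q}(\mathbf K)$. Then the set of values $\{A[U,W]:(U,W)\in\mathcal M_{p\times q}\}$ is contained in a subring $\tilde{\mathbf K}\subset\mathbf K$ which is finitely generated as a ring.
   Context: $\mathcal M_{p\times q}$ is the set of pairs $(U,W)$ of words of common length with $U$ over $\{0,\dots,p-1\}$, $W$ over $\{0,\dots,q-1\}$. For $A:\mathcal M_{p\times q}\to\mathbf K$ (values $A[U,W]$), $(\rho(S,T)A)[U,W]=A[US,WT]$. $\mathrm{Rec}_{p\times q}(\mathbf K)$ is the set of $A$ whose linear span of $\{\rho(S,T)A\}$ is finite-dimensional. *)

(* Defs.v *)
From mathcomp Require Import all_boot all_order all_algebra.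
Set Implicit Arguments. Unset Strict Implicit. Unset Printing Implicit Defensive.
Import GRing.Theory.
Local Open Scope ring_scope.

(* A function A : M_{p x q} -> K is represented by a function on all pairs of
   words (U, W) with U over 'I_p and W over 'I_q; only its values on pairs of
   common length (size U = size W) are meaningful. *)
Definition rho (K : fieldType) (p q : nat) (S : seq 'I_p) (T : seq 'I_q)
  (A : seq 'I_p -> seq 'I_q -> K) : seq 'I_p -> seq 'I_q -> K :=
  fun U W => A (U ++ S) (W ++ T).

(* A is in Rec_{p x q}(K): the linear span of {rho(S,T) A : (S,T) in M_{p x q}}
   (as functions on M_{p x q}) is finite dimensional, i.e. contained in the
   span of finitely many functions B_0, ..., B_{n-1} on M_{p x q}. *)
Definition Rec (K : fieldType) (p q : nat) (A : seq 'I_p -> seq 'I_q -> K) : Prop :=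
  exists (n : nat) (B : 'I_n -> seq 'I_p -> seq 'I_q -> K),
    forall (S : seq 'I_p) (T : seq 'I_q), size S = size T ->
      exists c : 'I_n -> K, forall (U : seq 'I_p) (W : seq 'I_q), size U = size W ->
        rho S T A U W = \sum_(i < n) c i * B i U W.

Inductive in_gen_subring (K : fieldType) (gens : seq K) : K -> Prop :=
  | gen_mem : forall x, x \in gens -> in_gen_subring gens x
  | gen_one : in_gen_subring gens 1
  | gen_opp : forall x, in_gen_subring gens x -> in_gen_subring gens (- x)
  | gen_add : forall x y, in_gen_subring gens x -> in_gen_subring gens y ->
                in_gen_subring gens (x + y)
  | gen_mul : forall x y, in_gen_subring gens x -> in_gen_subring gens y ->
                in_gen_subring gens (x * y).

(* Main.v *)
Require Import Defs.
From mathcomp Require Import all_boot all_order all_algebra.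
Set Implicit Arguments. Unset Strict Implicit. Unset Printing Implicit Defensive.
Import GRing.Theory.
Local Open Scope ring_scope.

Definition fv (K : fieldType) (p q : nat) (A : seq 'I_p -> seq 'I_q -> K)
  (x y : seq 'I_p * seq 'I_q) : K := A (x.1 ++ y.1) (x.2 ++ y.2).

Definition okp (p q : nat) (x : seq 'I_p * seq 'I_q) := size x.1 == size x.2.

Definition mxM (K : fieldType) (p q : nat) (A : seq 'I_p -> seq 'I_q -> K) r
  (pi sg : 'I_r -> seq 'I_p * seq 'I_q) : 'M[K]_r := \matrix_(i, j) fv A (pi i) (sg j).

Definition Pr (K : fieldType) (p q : nat) (A : seq 'I_p -> seq 'I_q -> K) r :=
  exists pi sg : 'I_r -> seq 'I_p * seq 'I_q,
    [/\ forall i, okp (pi i), forall j, okp (sg j) & mxM A pi sg \in unitmx].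

Lemma Pr0 (K : fieldType) (p q : nat) (A : seq 'I_p -> seq 'I_q -> K) : Pr A 0.
Proof.
exists (fun i => ([::], [::])), (fun i => ([::], [::])); split.
- by [].
- by [].
by rewrite unitmxE det_mx00 unitr1.
Qed.

Lemma Pr_bound (K : fieldType) (p q : nat) (A : seq 'I_p -> seq 'I_q -> K) n
  (B : 'I_n -> seq 'I_p -> seq 'I_q -> K) :
  (forall (S : seq 'I_p) (T : seq 'I_q), size S = size T ->
      exists c : 'I_n -> K, forall (U : seq 'I_p) (W : seq 'I_q), size U = size W ->
        rho S T A U W = \sum_(i < n) c i * B i U W) ->
  forall r, Pr A r -> (r <= n)%N.
Proof.
move=> HB r [pi [sg [Hpi Hsg Hu]]].
have [c Hc] : exists c : 'I_r -> 'I_n -> K, forall j (U : seq 'I_p) (W : seq 'I_q),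
    size U = size W -> rho (sg j).1 (sg j).2 A U W = \sum_(i < n) c j i * B i U W.
  apply: (@fin_all_exists _ (fun=> 'I_n -> K) (fun j (c : 'I_n -> K) => forall U W, size U = size W ->
      rho (sg j).1 (sg j).2 A U W = \sum_(i < n) c i * B i U W)) => j.
  by apply: HB; apply/eqP; exact: Hsg.
have Heq : mxM A pi sg = (\matrix_(k, i) B i (pi k).1 (pi k).2) *m (\matrix_(i, j) c j i).
  apply/matrixP => k j; rewrite !mxE.
  rewrite /fv -/(rho _ _ A _ _) Hc; last by apply/eqP; exact: Hpi.
  by apply: eq_bigr => i _; rewrite !mxE mulrC.
move/mxrank_unit: Hu => Hr.
rewrite -[X in (X <= _)%N]Hr Heq.
by apply: leq_trans (mxrankM_maxl _ _) (rank_leq_col _).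
Qed.

Lemma expand (K : fieldType) (p q : nat) (A : seq 'I_p -> seq 'I_q -> K) r
  (pi sg : 'I_r -> seq 'I_p * seq 'I_q) :
  (forall i, okp (pi i)) -> (forall j, okp (sg j)) -> mxM A pi sg \in unitmx ->
  ~ Pr A (r + 1) ->
  forall x y, okp x -> okp y ->
  fv A x y = \sum_(j < r) \sum_(k < r) fv A x (sg j) * invmx (mxM A pi sg) j k * fv A (pi k) y.
Proof.
move=> Hpi Hsg Hu Hmax x y Hx Hy.
set M := mxM A pi sg.
set yv : 'rV[K]_r := \row_j fv A x (sg j).
set cv : 'cV[K]_r := \col_k fv A (pi k) y.
have -> : \sum_(j < r) \sum_(k < r) fv A x (sg j) * invmx M j k * fv A (pi k) y
    = (yv *m invmx M *m cv) 0 0.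
  rewrite !mxE exchange_big /=; apply: eq_bigr => k _.
  rewrite !mxE mulr_suml; apply: eq_bigr => j _.
  by rewrite !mxE.
apply/eqP; rewrite -subr_eq0; apply/negPn/negP => Hd.
apply: Hmax.
pose pi' (i : 'I_(r + 1)) := match split i with inl k => pi k | inr _ => x end.
pose sg' (i : 'I_(r + 1)) := match split i with inl k => sg k | inr _ => y end.
exists pi', sg'; split.
- by move=> i; rewrite /pi'; case: split.
- by move=> i; rewrite /sg'; case: split.
have HN : mxM A pi' sg' = block_mx M cv yv (fv A x y)%:M.
  apply/matrixP => i j; rewrite /block_mx /col_mx /row_mx !mxE /pi' /sg'.
  case Ei: (split i) => [k|k]; case Ej: (split j) => [l|l]; rewrite !mxE ?Ej //=.
  - by rewrite /M mxE.
  - by rewrite /cv mxE.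
  - by rewrite /yv mxE.
  - by rewrite mxE (ord1 k) (ord1 l) eqxx mulr1n.
rewrite HN.
set L := block_mx (1%:M : 'M[K]_r) 0 (- (yv *m invmx M)) (1%:M : 'M[K]_1).
suff : L *m block_mx M cv yv (fv A x y)%:M \in unitmx by rewrite unitmx_mul => /andP[].
rewrite /L mulmx_block !mul1mx !mul0mx !addr0 ?add0r mulNmx -mulmxA mulVmx // mulmx1 addNr.
rewrite unitmxE det_ublock unitrM -unitmxE Hu /=.
rewrite mulNmx addrC.
have -> : (fv A x y)%:M - yv *m invmx M *m cv = (fv A x y - (yv *m invmx M *m cv) 0 0)%:M :> 'M_1.
  by apply/matrixP => i j; rewrite (ord1 i) (ord1 j) !mxE eqxx !mulr1n.
by rewrite det_scalar1 unitfE.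
Qed.
From Stdlib Require Import Classical.
From mathcomp Require Import zify.

Lemma exists_max (K : fieldType) (p q : nat) (A : seq 'I_p -> seq 'I_q -> K) n :
  (forall r, Pr A r -> (r <= n)%N) -> exists r, Pr A r /\ ~ Pr A (r + 1).
Proof.
move=> Hb.
suff H : forall m k, (n - k <= m)%N -> Pr A k -> exists r, Pr A r /\ ~ Pr A (r + 1).
  exact: (H n 0%N (leq_subr _ _) (Pr0 A)).
elim=> [|m IH] k Hk Pk; case: (classic (Pr A (k + 1))) => H; try by exists k.
- by move: (Hb _ H) Hk; lia.
- apply: (IH (k + 1)%N) => //.
  by move: Hk (Hb _ H); lia.
Qed.

Lemma gen_sum (K : fieldType) (gens : seq K) (I : finType) (F : I -> K) :
  (forall i, in_gen_subring gens (F i)) -> in_gen_subring gens (\sum_i F i).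
Proof.
move=> HF; apply: (big_ind (in_gen_subring gens)) => //.
- by rewrite -(addrN 1); apply: gen_add; [apply: gen_one | apply: gen_opp; apply: gen_one].
- by move=> x y; apply: gen_add.
Qed.

Lemma gen_sub (K : fieldType) (g1 g2 : seq K) x :
  {subset g1 <= g2} -> in_gen_subring g1 x -> in_gen_subring g2 x.
Proof.
move=> Hs; elim=> {x} [x /Hs||||].
- exact: gen_mem.
- exact: gen_one.
- by move=> x _; apply: gen_opp.
- by move=> x y _ Hx _ Hy; apply: gen_add.
- by move=> x y _ Hx _ Hy; apply: gen_mul.
Qed.

Theorem mainTheorem8 (K : fieldType) (p q : nat) (A : seq 'I_p -> seq 'I_q -> K) :
  Rec A ->
  exists gens : seq K,
    forall (U : seq 'I_p) (W : seq 'I_q), size U = size W -> in_gen_subring gens (A U W).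
Proof.
move=> [n [B HB]].
have [r [[pi [sg [Hpi Hsg Hu]]] Hmax]] := exists_max (Pr_bound HB).
have E := expand Hpi Hsg Hu Hmax.
set iM := invmx (mxM A pi sg) in E.
pose g1 := [seq fv A ([::], [::]) (sg j) | j : 'I_r].
pose g2 := [seq iM jk.1 jk.2 | jk : 'I_r * 'I_r].
pose g3 := [seq fv A (pi t.1.1) (t.2.1 :: (sg t.1.2).1, t.2.2 :: (sg t.1.2).2)
             | t : 'I_r * 'I_r * ('I_p * 'I_q)].
pose g4 := [seq fv A (pi k) ([::], [::]) | k : 'I_r].
exists (g1 ++ g2 ++ g3 ++ g4).
have G2 : forall j k, in_gen_subring (g1 ++ g2 ++ g3 ++ g4) (iM j k).
  move=> j k; apply: gen_mem; rewrite !mem_cat; apply/orP; right; apply/orP; left.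
  by rewrite /g2; apply/imageP; exists (j, k).
have Hrow : forall U W, size U = size W -> forall j,
    in_gen_subring (g1 ++ g2 ++ g3 ++ g4) (fv A (U, W) (sg j)).
  elim/last_ind => [|U a IH] W.
    case: W => // _ j; apply: gen_mem; rewrite !mem_cat; apply/orP; left.
    by rewrite /g1; apply/imageP; exists j.
  case/lastP: W => [|W b]; first by rewrite size_rcons.
  rewrite !size_rcons => /eqP; rewrite eqSS => /eqP HUW j.
  have -> : fv A (rcons U a, rcons W b) (sg j) =
      fv A (U, W) (a :: (sg j).1, b :: (sg j).2) by rewrite /fv /= !cat_rcons.
  rewrite E; last by move: (Hsg j); rewrite /okp /= eqSS.
    apply: gen_sum => j'; apply: gen_sum => k.
    apply: gen_mul; first apply: gen_mul.
    - exact: IH.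
    - exact: G2.
    apply: gen_mem; rewrite !mem_cat; apply/orP; right; apply/orP; right; apply/orP; left.
    by rewrite /g3; apply/imageP; exists (k, j, (a, b)).
  by rewrite /okp HUW.
move=> U W HUW.
have -> : A U W = fv A (U, W) ([::], [::]) by rewrite /fv /= !cats0.
rewrite E //; last by rewrite /okp HUW.
apply: gen_sum => j'; apply: gen_sum => k.
apply: gen_mul; first apply: gen_mul.
- exact: Hrow.
- exact: G2.
apply: gen_mem; rewrite !mem_cat; apply/orP; right; apply/orP; right; apply/orP; right.
by rewrite /g4; apply/imageP; exists k.
Qed.
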